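(* Let $(F_n)_{n\ge1}$ be a sequence of probability distribution functions on $\mathbb{R}$, and let $X$ denote a random variable with distribution $F_n$. Assume: (i) $0<F_n(0)$ for all $n$ and $F_n(0)\to0$; (ii) $\mu_n:=\mathbb{E}_{F_n}[X]\ge\mu$ for all $n$, for some constant $\mu>0$; (iii) there are constants $C,K,M<\infty$ such that for every $n$: $\mathbb{E}_{F_n}[X^2]\le C$, $\mathbb{E}_{F_n}[X^2\mid X\le0]\le K$, and $F_n(x+t)-F_n(x)\le Mt$ for all $x\ge0$, $t>0$. Define $G_n(y)=\int_{-\infty}^{y}(x^2-yx)\,dF_n(x)$ and let $y_n^*\ge0$ be the (unique) zero of $G_n$ in $[0,\infty)$. Then $$F_n(y_n^* )\le F_n(0)+\Theta^{1/3}F_n(0)^{1/3},\qquad \Theta=27\Big(K+\frac{C\sqrt K}{\mu}\Big)M^2,$$ so in particular $F_n(y_n^* )=O(F_n(0)^{1/3})\to0$ as $n\to\infty$. *)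

(* Defs.v *)
(* A probability distribution function F on R is
   represented by its law: a probability measure P on the Borel sets of R,
   with F(y) = P(]-oo, y]). X is the identity random variable under P. *)
From HB Require Import structures.
From mathcomp Require Import all_boot all_order all_algebra.
From mathcomp Require Import all_classical all_reals all_analysis.
Set Implicit Arguments. Unset Strict Implicit. Unset Printing Implicit Defensive.
Import Order.TTheory GRing.Theory Num.Theory.
Local Open Scope classical_set_scope.
Local Open Scope ring_scope.

Definition distF (R : realType) (P : probability R R) (y : R) : R :=
  fine (P [set` `]-oo, y]]).

Definition mean (R : realType) (P : probability R R) : \bar R :=
  (\int[P]_x (x%:E))%E.
Definition second_moment (R : realType) (P : probability R R) : \bar R :=
  (\int[P]_x ((x ^+ 2)%:E))%E.

Definition cond_second_moment_nonpos (R : realType) (P : probability R R) : R :=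
  fine (\int[P]_(x in [set` `]-oo, 0%R : R]]) ((x ^+ 2)%:E))%E / distF P 0.

Definition Gfun (R : realType) (P : probability R R) (y : R) : R :=
  fine (\int[P]_(x in [set` `]-oo, y]]) ((x ^+ 2 - y * x)%:E))%E.

(* Main.v *)
Require Import Defs.
From HB Require Import structures.
From mathcomp Require Import all_boot all_order all_algebra.
From mathcomp Require Import all_classical all_reals all_analysis.
From mathcomp Require Import ring lra measurable_realfun.
Import Order.TTheory GRing.Theory Num.Theory.
Local Open Scope classical_set_scope.
Local Open Scope ring_scope.
Set Implicit Arguments.


Lemma distFE (R : realType) (P : probability R R) b :
  (distF P b)%:E = P [set` `]-oo, b]].
Proof.
rewrite /distF fineK // ge0_fin_numE ?measure_ge0 //.
by apply: (le_lt_trans (probability_le1 _ _)) => //; rewrite ltey.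
Qed.

Lemma distF_ge0 (R : realType) (P : probability R R) b : 0 <= distF P b.
Proof. by rewrite -lee_fin distFE measure_ge0. Qed.

Lemma normx_le (R : realType) (x : R) : `|x| <= 1 + x ^+ 2.
Proof.
case: (lerP 0 x) => hx; [rewrite ger0_norm // | rewrite ltr0_norm //]; nra.
Qed.

Lemma int_sq (R : realType) (P : probability R R) C :
  (second_moment P <= C%:E)%E ->
  P.-integrable setT (fun x : R => (x ^+ 2)%:E).
Proof.
move=> hC; apply/integrableP; split.
  apply/measurable_EFinP; exact: measurable_funX.
under eq_integral do rewrite gee0_abs ?lee_fin ?sqr_ge0 //.
by apply: (le_lt_trans hC); rewrite ltey.
Qed.

Lemma int_bound (R : realType) (P : probability R R) C (h : R -> R) c :
  (second_moment P <= C%:E)%E -> measurable_fun setT h ->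
  (forall x, `|h x| <= c * (1 + x ^+ 2)) ->
  P.-integrable setT (fun x : R => (h x)%:E).
Proof.
move=> hC mh hb.
have i1 : P.-integrable setT (fun x : R => (c * (1 + x ^+ 2))%:E).
  apply: (@eq_integrable _ _ _ P setT measurableT (fun x => c%:E * ((cst 1 x)%:E + (x ^+ 2)%:E))%E) => //.
    apply: integrableZl => //; apply: (@integrableD _ _ _ P setT measurableT (fun x => (cst 1 x)%:E)) => //.
    exact: finite_measure_integrable_cst.
  exact: int_sq hC.
apply: le_integrable i1 => //; first exact/measurable_EFinP.
move=> x _; rewrite /= lee_fin; apply: (le_trans (hb x)).
exact: ler_norm.
Qed.


Definition ind (R : realType) (b : R) (x : R) : R := \1_([set` `]-oo, b]]) x.

Arguments ind {R}.

Lemma indE (R : realType) (b x : R) : ind b x = if x <= b then 1 else 0.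
Proof.
rewrite /ind indicE; case: ifP => h.
  by rewrite mem_set //= in_itv /= h.
by rewrite memNset //= in_itv /= h.
Qed.

Lemma ind_mes (R : realType) (b : R) : measurable_fun setT (ind b).
Proof. exact: measurable_indic. Qed.

Lemma int_ind (R : realType) (P : probability R R) b :
  (\int[P]_x (ind b x)%:E = (distF P b)%:E)%E.
Proof. by rewrite integral_indic // setIT distFE. Qed.

Lemma int_lin (R : realType) (P : probability R R) (f g : R -> R) (al : R) :
  P.-integrable setT (fun x => (f x)%:E) -> P.-integrable setT (fun x => (g x)%:E) ->
  P.-integrable setT (fun x => (al * f x + g x)%:E) /\
  (\int[P]_x (al * f x + g x)%:E = al%:E * \int[P]_x (f x)%:E + \int[P]_x (g x)%:E)%E.
Proof.
move=> fi gi.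
have fi' : P.-integrable setT (fun x => (al * f x)%:E).
  apply: (@eq_integrable _ _ _ P setT measurableT (fun x => al%:E * (f x)%:E)%E) => //.
  exact: integrableZl.
split.
  apply: (@eq_integrable _ _ _ P setT measurableT (fun x => ((al * f x)%R)%:E + (g x)%:E)%E) => //.
  exact: (@integrableD _ _ _ P setT measurableT (fun x => ((al * f x)%R)%:E)) fi' gi.
rewrite -(integralZl measurableT fi).
have -> : (fun x => (al * f x + g x)%:E) = ((EFin \o (fun x => (al * f x)%R)) \+ (EFin \o g))%E.
  by apply/funext => x.
by rewrite (integralD_EFin measurableT fi' gi).
Qed.

Lemma Gfun_int (R : realType) (P : probability R R) C y :
  (second_moment P <= C%:E)%E ->
  P.-integrable setT (fun x => ((x ^+ 2 - y * x) * ind y x)%:E) /\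
  (\int[P]_x ((x ^+ 2 - y * x) * ind y x)%:E = (Gfun P y)%:E)%E.
Proof.
move=> hC.
have hi : P.-integrable setT (fun x => ((x ^+ 2 - y * x) * ind y x)%:E).
  apply: (@int_bound _ _ _ _ (1 + `|y|) hC).
    apply: measurable_funM => //; last exact: ind_mes.
    apply: measurable_funB; first exact: measurable_funX.
    exact: measurable_funM.
  move=> x; rewrite indE normrM.
  have h1 : `|(if x <= y then 1 else 0 : R)| <= 1 by case: ifP; rewrite ?normr0 ?normr1.
  have h2 : `|x ^+ 2 - y * x| <= (1 + `|y|) * (1 + x ^+ 2).
    apply: (le_trans (ler_normB _ _)); rewrite (ger0_norm (sqr_ge0 x)) normrM.
    have := ler_wpM2l (normr_ge0 y) (@normx_le _ x); have := normr_ge0 y; lra.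
  apply: (le_trans (ler_pM _ _ h2 h1)) => //; last by rewrite mulr1.
split => //.
have eqi : (\int[P]_(x in [set` `]-oo, y]]) ((x ^+ 2 - y * x)%:E) =
    \int[P]_x ((x ^+ 2 - y * x) * ind y x)%:E)%E.
  rewrite integral_mkcond; apply: eq_integral => x _; rewrite /patch indE.
  case: ifP => h; case: ifP => h'.

  - by rewrite mulr1.
  - by move: h => /set_mem /=; rewrite in_itv /= h'.
  - by move: h => /negP; rewrite inE /= in_itv /= h'.
  - by rewrite mulr0.
rewrite /Gfun eqi fineK //.
exact: (@integrable_fin_num _ _ _ P setT measurableT _ hi).
Qed.

Lemma mkcond_ind (R : realType) (P : probability R R) (h : R -> R) b :
  (\int[P]_(x in [set` `]-oo, b]]) (h x)%:E = \int[P]_x (h x * ind b x)%:E)%E.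
Proof.
rewrite integral_mkcond; apply: eq_integral => x _; rewrite /patch indE.
case: ifP => hx; case: ifP => h'.
- by rewrite mulr1.
- by move: hx => /set_mem /=; rewrite in_itv /= h'.
- by move: hx => /negP; rewrite inE /= in_itv /= h'.
- by rewrite mulr0.
Qed.

Lemma int_scale (R : realType) (P : probability R R) (f : R -> R) (al : R) :
  P.-integrable setT (fun x => (f x)%:E) ->
  P.-integrable setT (fun x => (al * f x)%:E) /\
  (\int[P]_x (al * f x)%:E = al%:E * \int[P]_x (f x)%:E)%E.
Proof.
move=> fi; split.
  apply: (@eq_integrable _ _ _ P setT measurableT (fun x => al%:E * (f x)%:E)%E) => //.
  exact: integrableZl.
by rewrite -(integralZl measurableT fi).
Qed.

Lemma int_x (R : realType) (P : probability R R) C :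
  (second_moment P <= C%:E)%E -> P.-integrable setT (fun x : R => x%:E).
Proof.
move=> hC; apply: (@int_bound _ _ _ (fun x => x) 1 hC) => // x.
by rewrite mul1r normx_le.
Qed.

Lemma ybound (R : realType) (P : probability R R) C mu y :
  (second_moment P <= C%:E)%E -> (mu%:E <= mean P)%E -> 0 <= y ->
  Gfun P y = 0 -> y * mu <= C.
Proof.
move=> hC hmu y0 G0.
have [fi fE] := Gfun_int P C y hC.
have xi := int_x P C hC.
have si := int_sq P C hC.
have [gi gE] := @int_lin _ P _ _ (-1) fi si.
have [yi yE] := @int_scale _ P _ y xi.
have := @le_integral _ _ _ P setT measurableT _ _ yi gi.
rewrite yE gE fE G0 mule0 add0r.
move=> H.
have {H} H : (y%:E * mean P <= second_moment P)%E.
  apply: H => x _; rewrite lee_fin indE; case: ifP => hx; first lra.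
  have : y < x by rewrite ltNge hx.
  move=> yx; have : 0 <= x by lra.
  nra.
rewrite -lee_fin EFinM; apply: le_trans (le_trans H hC).
exact: lee_wpmul2l.
Qed.

Definition Aneg (R : realType) (P : probability R R) : R :=
  fine (\int[P]_(x in [set` `]-oo, 0%R : R]]) ((x ^+ 2)%:E))%E.

Lemma key (R : realType) (P : probability R R) C y s a :
  (second_moment P <= C%:E)%E -> 0 < s -> 0 < a -> 4 * a <= y ->
  Gfun P y = 0 ->
  3 * a ^+ 2 * (distF P (y - a) - distF P a) <=
    (1 + y / (2 * s)) * Aneg P + (y * s / 2) * distF P 0.
Proof.
move=> hC s0 a0 ya G0.
have [fi fE] := Gfun_int P C y hC.
have F1i : P.-integrable setT (fun x : R => (x ^+ 2 * ind 0 x)%:E).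
  apply: (@int_bound _ _ _ _ 1 hC).
    apply: measurable_funM; [exact: measurable_funX | exact: ind_mes].
  move=> x; rewrite indE mul1r; case: ifP => _; rewrite ?mulr1 ?mulr0 ?normr0.
    rewrite ger0_norm ?sqr_ge0 //; lra.
  have := sqr_ge0 x; lra.
have indi b : P.-integrable setT (fun x : R => (ind b x)%:E).
  exact: integrable_indic.
have AE : (\int[P]_x (x ^+ 2 * ind 0 x)%:E = (Aneg P)%:E)%E.
  rewrite /Aneg -mkcond_ind fineK //.
  rewrite mkcond_ind; exact: (@integrable_fin_num _ _ _ P setT measurableT _ F1i).
set c1 := 1 + y / (2 * s).
set c2 := y * s / 2.
set c3 := 3 * a ^+ 2.
have [g4i g4E] := @int_scale _ P _ c3 (indi a).
have [g3i g3E] := @int_lin _ P _ _ (- c3) (indi (y - a)) g4i.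
have [g2i g2E] := @int_lin _ P _ _ c2 (indi 0) g3i.
have [g1i g1E] := @int_lin _ P _ _ c1 F1i g2i.
have := @le_integral _ _ _ P setT measurableT _ _ fi g1i.
rewrite g1E g2E g3E g4E fE G0 AE !int_ind.
move=> H.
have {H} H : (0 <= c1%:E * (Aneg P)%:E + (c2%:E * (distF P 0)%:E +
      ((- c3)%:E * (distF P (y - a))%:E + c3%:E * (distF P a)%:E)))%E.
  apply: H => x _; rewrite lee_fin !indE.
  set t := y / (2 * s).
  have t0 : 0 <= t by rewrite /t divr_ge0 //; lra.
  have yE : y = 2 * t * s by rewrite /t; field; rewrite lt0r_neq0 //.
  have c1E : c1 = 1 + t by [].
  have c2E : c2 = t * s ^+ 2 by rewrite /c2 yE; field.
  rewrite c1E c2E /c3.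
  case: (lerP x 0) => hx0.
    have -> : (x <= a) = true by apply/idP; lra.
    have -> : (x <= y - a) = true by apply/idP; lra.
    have -> : (x <= y) = true by apply/idP; lra.
    have := mulr_ge0 t0 (sqr_ge0 (x + s)).
    rewrite yE; nra.
  case: (lerP x a) => hxa.
    have -> : (x <= y - a) = true by apply/idP; lra.
    have -> : (x <= y) = true by apply/idP; lra.
    have : 0 <= x * (y - x) by apply: mulr_ge0; lra.
    nra.
  case: (lerP x (y - a)) => hxya.
    have -> : (x <= y) = true by apply/idP; lra.
    have h1 : 0 <= (x - a) * (y - a - x) by apply: mulr_ge0; lra.
    have h2 : 0 <= a * (y - 4 * a) by apply: mulr_ge0; lra.
    nra.
  case: (lerP x y) => hxy.
    have : 0 <= x * (y - x) by apply: mulr_ge0; lra.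
    nra.
  nra.
rewrite -!EFinM -!EFinD lee_fin in H.
lra.
Qed.


Lemma cube_root (R : realType) (q T : R) : 0 <= q -> 0 <= T -> q ^+ 3 <= T ->
  q <= T `^ (3^-1).
Proof.
move=> q0 T0 h.
have -> : q = (q ^+ 3) `^ (3^-1).
  rewrite -powR_mulrn // -powRrM mulfV ?powRr1 //.
apply: ge0_ler_powR => //; rewrite ?nnegrE ?exprn_ge0 //.
Qed.

Lemma Aneg_ge0 (R : realType) (P : probability R R) : 0 <= Aneg P.
Proof. by rewrite /Aneg fine_ge0 // integral_ge0 // => x _; rewrite lee_fin sqr_ge0. Qed.

Lemma bound_n (R : realType) (P : probability R R) (mu C K M y : R) :
  0 < distF P 0 -> 0 < mu -> (mu%:E <= mean P)%E ->
  (second_moment P <= C%:E)%E -> cond_second_moment_nonpos P <= K ->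
  (forall x t : R, 0 <= x -> 0 < t -> distF P (x + t) - distF P x <= M * t) ->
  0 <= y -> Gfun P y = 0 ->
  (distF P y - distF P 0) ^+ 3 <=
    (27 * (K + C * Num.sqrt K / mu) * M ^+ 2) * distF P 0.
Proof.
move=> p0 mu0 hmu hC hK hM y0 G0.
set p := distF P 0 in p0 hK *.
set q := distF P y - p.
have A0 := Aneg_ge0 P.
have AK : Aneg P <= K * p.
  by move: hK; rewrite /cond_second_moment_nonpos -/(Aneg P) ler_pdivrMr.
have K0 : 0 <= K.
  have : 0 <= K * p by lra.
  by rewrite pmulr_lge0.
have ymu := ybound P C mu y hC hmu y0 G0.
have C0 : 0 <= C by have := mulr_ge0 y0 (ltW mu0); lra.
have sK0 := sqrtr_ge0 K.
have L0 : 0 <= K + C * Num.sqrt K / mu.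
  by apply: addr_ge0 => //; apply: divr_ge0; [apply: mulr_ge0 | lra].
have Th0 : 0 <= 27 * (K + C * Num.sqrt K / mu) * M ^+ 2.
  by apply: mulr_ge0; [apply: mulr_ge0 => //| exact: sqr_ge0].
case: (lerP q 0) => q0.
  have : q ^+ 3 <= 0.
    have : 0 <= (- q) ^+ 3 by apply: exprn_ge0; lra.
    by rewrite exprNn; lra.
  have := mulr_ge0 Th0 (ltW p0); lra.
have ypos : 0 < y.
  rewrite lt_neqAle y0 andbT; apply/negP => /eqP y0'.
  by move: q0; rewrite /q -y0' subrr ltxx.
have qMy : q <= M * y by have := hM 0 y (lexx 0) ypos; rewrite add0r.
have M0 : 0 < M.
  rewrite ltNge; apply/negP => M0.
  have : 0 <= (- M) * y by apply: mulr_ge0; lra.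
  lra.
set a := q / (4 * M).
have a0 : 0 < a by rewrite /a divr_gt0 //; lra.
have Ma : M * a = q / 4 by rewrite /a; field; rewrite lt0r_neq0.
have ya : 4 * a <= y.
  have -> : 4 * a = q / M by rewrite /a; field; rewrite lt0r_neq0.
  by rewrite ler_pdivrMr // mulrC.
have h1 := hM (y - a) a ltac:(lra) a0.
have h2 := hM 0 a (lexx 0) a0.
rewrite subrK in h1; rewrite add0r in h2.
have mass : q / 2 <= distF P (y - a) - distF P a.
  move: Ma h1 h2; rewrite /q /p; lra.
have key1 s : 0 < s -> 3 * a ^+ 2 * (q / 2) <=
    (1 + y / (2 * s)) * Aneg P + (y * s / 2) * p.
  move=> s0; apply: le_trans (key P C y s a hC s0 a0 ya G0).
  by apply: ler_wpM2l => //; apply: mulr_ge0 => //; exact: sqr_ge0.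
have M2 : 0 < M ^+ 2 by apply: exprn_gt0.
have a2 : 3 * a ^+ 2 * (q / 2) = 3 * q ^+ 3 / (32 * M ^+ 2).
  by rewrite /a; field; rewrite lt0r_neq0.
set L := K + C * Num.sqrt K / mu in L0 Th0 *.
suff XL : 3 * a ^+ 2 * (q / 2) <= L * p.
  rewrite a2 ler_pdivrMr in XL; last by apply: mulr_gt0 => //; lra.
  have : 0 <= (27 - 32/3) * L * M ^+ 2 * p.
    by apply: mulr_ge0; [apply: mulr_ge0; [apply: mulr_ge0 => //; lra| lra] | lra].
  rewrite -/q; nra.
case: (ltrP 0 K) => Kpos; last first.
  have K0' : K = 0 by lra.
  have A00 : Aneg P = 0 by rewrite K0' mul0r in AK; lra.
  have s0 : 0 < a ^+ 2 * q / (y * p).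
    by apply: divr_gt0; [apply: mulr_gt0 => //; exact: exprn_gt0 | exact: mulr_gt0].
  have := key1 _ s0; rewrite A00 mulr0 add0r.
  have -> : y * (a ^+ 2 * q / (y * p)) / 2 * p = a ^+ 2 * q / 2.
    by field; apply/andP; split; rewrite lt0r_neq0.
  have : 0 < a ^+ 2 * q by apply: mulr_gt0 => //; exact: exprn_gt0.
  lra.
have sKp : 0 < Num.sqrt K by rewrite sqrtr_gt0.
have := key1 _ sKp.
have e1 : y / (2 * Num.sqrt K) * Aneg P <= y * Num.sqrt K * p / 2.
  apply: le_trans (_ : y / (2 * Num.sqrt K) * (K * p) <= _).
    by apply: ler_wpM2l => //; apply: divr_ge0 => //; lra.
  rewrite le_eqVlt; apply/orP; left; apply/eqP.
  have hK2 : K = Num.sqrt K ^+ 2 by rewrite sqr_sqrtr.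
  move: (Num.sqrt K) hK2 sKp => r -> r0.
  by field; rewrite lt0r_neq0.
have e2 : y * Num.sqrt K * p <= C * Num.sqrt K / mu * p.
  apply: ler_wpM2r; first lra.
  rewrite mulrAC; apply: ler_wpM2r => //.
  by rewrite ler_pdivlMr.
rewrite /L; lra.
Qed.


Lemma to_right (R : realType) (u : nat -> R) :
  (forall n, 0 < u n) -> u @ \oo --> (0 : R^o) -> u @ \oo --> at_right (0 : R^o).
Proof.
move=> up uc A HA.
have P0 : (u @ \oo) (fun x => 0 < x) by exists 0%N => // n _; exact: up n.
apply: (filterS2 _ (fun x (h1 : 0 < x -> A x) (h2 : 0 < x) => h1 h2) (uc _ HA) P0).
Qed.

Lemma root_cvg (R : realType) (u : nat -> R) r :
  0 < r -> (forall n, 0 < u n) -> u @ \oo --> (0 : R^o) ->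
  (fun n => u n `^ r) @ \oo --> (0 : R^o).
Proof.
move=> r0 up uc.
have := cvg_comp _ _ (to_right up uc) (powR_cvg0 r0).
by [].
Qed.

Unset Implicit Arguments.

Theorem theorem3 (R : realType) (P : nat -> probability R R)
    (mu C K M : R) :
  (forall n, 0 < distF (P n) 0) ->
  (fun n => distF (P n) 0) @ \oo --> (0%R : R^o) ->
  0 < mu ->
  (forall n, (mu%:E <= mean (P n))%E) ->
  (forall n, (second_moment (P n) <= C%:E)%E) ->
  (forall n, cond_second_moment_nonpos (P n) <= K) ->
  (forall n (x t : R), 0 <= x -> 0 < t ->
      distF (P n) (x + t) - distF (P n) x <= M * t) ->
  let Theta := 27 * (K + C * Num.sqrt K / mu) * M ^+ 2 in
  (forall n (y : R), 0 <= y -> Gfun (P n) y = 0 ->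
      distF (P n) y <= distF (P n) 0
                       + Theta `^ (3^-1) * distF (P n) 0 `^ (3^-1)) /\
  (forall ystar : nat -> R,
      (forall n, 0 <= ystar n /\ Gfun (P n) (ystar n) = 0) ->
      (fun n => distF (P n) (ystar n)) @ \oo --> (0%R : R^o)).
Proof.
move=> hp hpc mu0 hmu hC hK hM Theta.
have part1 : forall n (y : R), 0 <= y -> Gfun (P n) y = 0 ->
      distF (P n) y <= distF (P n) 0
                       + Theta `^ (3^-1) * distF (P n) 0 `^ (3^-1).
  move=> n y y0 G0.
  have B := bound_n (P n) mu C K M y (hp n) mu0 (hmu n) (hC n) (hK n) (hM n) y0 G0.
  rewrite -/Theta in B.
  have hpn := hp n.
  move: B; set q := distF (P n) y - distF (P n) 0 => B.
  have e0 : 0 <= Theta `^ (3^-1) * distF (P n) 0 `^ (3^-1).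
    by apply: mulr_ge0; exact: powR_ge0.
  case: (lerP q 0) => q0.
    rewrite /q in q0; lra.
  have q3 : 0 <= q ^+ 3 by apply: exprn_ge0; lra.
  have Tp : 0 <= Theta * distF (P n) 0 by lra.
  have T0 : 0 <= Theta by move: Tp; rewrite pmulr_lge0.
  have := @cube_root _ q _ (ltW q0) Tp B.
  rewrite powRM // /q; lra.
split => // ys hys.
set c := Theta `^ (3^-1).
apply: (@squeeze_cvgr _ _ _ _ (fun=> 0) (fun n => distF (P n) 0 + c * distF (P n) 0 `^ (3^-1))).
- apply: nearW => n; apply/andP; split.
    exact: distF_ge0.
  by have [h1 h2] := hys n; exact: part1 n (ys n) h1 h2.
- exact: (cvg_cst (0 : R^o)).
- have r0 : (0 : R) < 3^-1 by rewrite invr_gt0; lra.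
  have H1 := @root_cvg _ _ (3^-1) r0 hp hpc.
  have := cvgD hpc (cvgM (cvg_cst c) H1).
  by rewrite mulr0 addr0; apply.
Qed.
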